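(* Let $\mu\in\mathcal C$ be nilpotent and suppose $P_\mu=\lambda\,\mathrm{Id}+\tfrac12(D+D^* )$ for some $\lambda\in\mathbb R$ and $D\in\mathrm{Der}(\mu)$. Then $$0=\|\pi(D^* )\mu\|^2+\mathrm{tr}\big(Q_\mu[D,D^*]\big),$$ where $Q_\mu\in\mathrm{End}(\mathfrak g)$ is defined by $\langle Q_\mu v,w\rangle=\sum_i\langle\mu(v,e_i),\mu(w,e_i)\rangle$ for $v,w\in\mathfrak g$.
   Context: $\mathfrak g$ is a real vector space of dimension $2n$ with complex structure $J$ and inner product $\langle\cdot,\cdot\rangle$ for which $J$ is orthogonal; $e_1,\dots,e_{2n}$ is an orthonormal basis; $^*$ denotes adjoint. Brackets are skew-symmetric bilinear maps $\nu:\mathfrak g\times\mathfrak g\to\mathfrak g$ with $\|\nu\|^2=\sum_{i<j}\|\nu(e_i,e_j)\|^2$; $\mathcal C$ is the set of brackets satisfying the Jacobi identity and $\nu(J\cdot,\cdot)=J\nu(\cdot,\cdot)$. For $A\in\mathrm{End}(\mathfrak g)$, $\pi(A)\nu=A\nu(\cdot,\cdot)-\nu(A\cdot,\cdot)-\nu(\cdot,A\cdot)$. $\mathrm{Der}(\nu)=\{D\in\mathrm{End}(\mathfrak g): DJ=JD,\ \pi(D)\nu=0\}$. $P_\nu:=\nu\nu^*$, i.e. $P_\nu v=\sum_{i<j}\langle v,\nu(e_i,e_j)\rangle\nu(e_i,e_j)$. *)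

(* Defs.v *)
(* The real vector space g of dimension 2n is modelled as
   column vectors 'cV[R]_(n.*2) with the standard inner product; the
   standard basis (delta_mx i 0) is the orthonormal basis e_1..e_{2n};
   endomorphisms are square matrices acting on the left, adjoint = transpose. *)
From HB Require Import structures.
From mathcomp Require Import all_boot all_order all_algebra.
Set Implicit Arguments. Unset Strict Implicit. Unset Printing Implicit Defensive.
Import Order.TTheory GRing.Theory Num.Theory.
Local Open Scope ring_scope.

Section Defs.
Variables (R : realFieldType) (m : nat).

Definition vec := 'cV[R]_m.
Definition bracket := vec -> vec -> vec.

Definition dotv (u v : vec) : R := (u^T *m v) 0 0.

Definition ebasis (i : 'I_m) : vec := delta_mx i 0.

Definition bnorm2 (nu : bracket) : R :=
  \sum_(i < m) \sum_(j < m | (i < j)%N) dotv (nu (ebasis i) (ebasis j)) (nu (ebasis i) (ebasis j)).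

Definition is_bracket (nu : bracket) : Prop :=
  [/\ forall (a : R) x y z, nu (a *: x + y) z = a *: nu x z + nu y z,
      forall (a : R) x y z, nu x (a *: y + z) = a *: nu x y + nu x z
    & forall x y, nu x y = - nu y x].

Definition jacobi (nu : bracket) : Prop :=
  forall x y z, nu x (nu y z) + nu y (nu z x) + nu z (nu x y) = 0.

Definition orth_cplx_str (J : 'M[R]_m) : Prop :=
  J *m J = - 1%:M /\ J^T *m J = 1%:M.

Definition in_C (J : 'M[R]_m) (nu : bracket) : Prop :=
  [/\ is_bracket nu, jacobi nu & forall x y, nu (J *m x) y = J *m nu x y].

Definition piA (A : 'M[R]_m) (nu : bracket) : bracket :=
  fun x y => A *m nu x y - nu (A *m x) y - nu x (A *m y).

Definition is_der (J : 'M[R]_m) (nu : bracket) (D : 'M[R]_m) : Prop :=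
  D *m J = J *m D /\ forall x y, piA D nu x y = 0.

Definition iter_bracket (nu : bracket) (xs : seq vec) (x : vec) : vec :=
  foldr (fun y acc => nu y acc) x xs.

(* nilpotent: the lower central series vanishes at some step, i.e. all
   k-fold brackets (which span the k-th term of the lower central series) are 0 *)
Definition nilpotent_br (nu : bracket) : Prop :=
  exists k : nat, forall (xs : k.-tuple vec) (x : vec), iter_bracket nu xs x = 0.

(* P_nu = nu nu^*, i.e. P v = sum_{i<j} <v, nu(e_i,e_j)> nu(e_i,e_j) *)
Definition Pmat (nu : bracket) : 'M[R]_m :=
  \sum_(i < m) \sum_(j < m | (i < j)%N) (nu (ebasis i) (ebasis j) *m (nu (ebasis i) (ebasis j))^T).

End Defs.

Arguments dotv {R m}.
Arguments ebasis {R m}.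
Arguments bnorm2 {R m}.
Arguments is_bracket {R m}.
Arguments jacobi {R m}.
Arguments orth_cplx_str {R m}.
Arguments in_C {R m}.
Arguments piA {R m}.
Arguments is_der {R m}.
Arguments iter_bracket {R m}.
Arguments nilpotent_br {R m}.
Arguments Pmat {R m}.

(* Main.v *)
Require Import Defs.
From HB Require Import structures.
From mathcomp Require Import all_boot all_order all_algebra.
From mathcomp Require Import ring lra.
Import Order.TTheory GRing.Theory Num.Theory.
Local Open Scope ring_scope.

Section Aux.
Variables (R : realFieldType) (m : nat).
Local Notation vec := ('cV[R]_m).
Local Notation e := (@ebasis R m).
Implicit Types (u v w x y z : vec) (A B C : 'M[R]_m) (nu : bracket R m).

Lemma dotvE u v : dotv u v = \sum_k u k 0 * v k 0.
Proof. by rewrite /dotv mxE; apply: eq_bigr => k _; rewrite mxE. Qed.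

Lemma dotvC u v : dotv u v = dotv v u.
Proof. by rewrite !dotvE; apply: eq_bigr => k _; rewrite mulrC. Qed.

Lemma dotvDr u v w : dotv u (v + w) = dotv u v + dotv u w.
Proof. by rewrite !dotvE -big_split; apply: eq_bigr => k _; rewrite mxE mulrDr. Qed.

Lemma dotvZr a u v : dotv u (a *: v) = a * dotv u v.
Proof. by rewrite !dotvE mulr_sumr; apply: eq_bigr => k _; rewrite mxE mulrCA. Qed.

Lemma dotvNr u v : dotv u (- v) = - dotv u v.
Proof. by rewrite !dotvE -sumrN; apply: eq_bigr => k _; rewrite mxE mulrN. Qed.

Lemma dotvBr u v w : dotv u (v - w) = dotv u v - dotv u w.
Proof. by rewrite dotvDr dotvNr. Qed.

Lemma dotvBl u v w : dotv (v - w) u = dotv v u - dotv w u.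
Proof. by rewrite dotvC dotvBr !(dotvC u). Qed.

Lemma dotvNl u v : dotv (- v) u = - dotv v u.
Proof. by rewrite dotvC dotvNr dotvC. Qed.

Lemma dotv_sumr I (r : seq I) (P : pred I) (F : I -> vec) u :
  dotv u (\sum_(i <- r | P i) F i) = \sum_(i <- r | P i) dotv u (F i).
Proof. by rewrite /dotv mulmx_sumr summxE. Qed.

Lemma dotv_suml I (r : seq I) (P : pred I) (F : I -> vec) u :
  dotv (\sum_(i <- r | P i) F i) u = \sum_(i <- r | P i) dotv (F i) u.
Proof. by rewrite dotvC dotv_sumr; apply: eq_bigr => i _; rewrite dotvC. Qed.

Lemma dotvMl A u v : dotv (A *m u) v = dotv u (A^T *m v).
Proof. by rewrite /dotv trmx_mul mulmxA. Qed.

Lemma dotv_e u i : dotv u (e i) = u i 0.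
Proof. by rewrite /dotv /ebasis -colE !mxE. Qed.

Lemma vexp u : u = \sum_k u k 0 *: e k.
Proof.
by rewrite {1}(matrix_sum_delta u); apply: eq_bigr => k _; rewrite big_ord1.
Qed.

Lemma mulmx_e A i : A *m e i = \sum_k A k i *: e k.
Proof.
by rewrite {1}(vexp (A *m e i)); apply: eq_bigr => k _; rewrite /ebasis -colE mxE.
Qed.

Lemma dotv_anti u v : v = - v -> dotv u v = 0.
Proof. move=> h; have := dotvNr u v; rewrite -h => h'; lra. Qed.


Section Br.
Variable nu : bracket R m.
Hypothesis hb : is_bracket nu.

Lemma br0l y : nu 0 y = 0.
Proof.
case: hb => h1 _ _; have := h1 1 0 0 y; rewrite scaler0 addr0 scale1r.
by rewrite -{1}[nu 0 y]addr0 => /addrI <-.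
Qed.

Lemma brDl x y z : nu (x + y) z = nu x z + nu y z.
Proof. by case: hb => h1 _ _; have := h1 1 x y z; rewrite !scale1r. Qed.

Lemma brZl a x z : nu (a *: x) z = a *: nu x z.
Proof. by case: hb => h1 _ _; have := h1 a x 0 z; rewrite !addr0 br0l addr0. Qed.

Lemma brBl x y z : nu (x - y) z = nu x z - nu y z.
Proof.
by rewrite brDl -scaleN1r brZl scaleN1r.
Qed.

Lemma brsk x y : nu x y = - nu y x.
Proof. by case: hb. Qed.

Lemma brBr x y z : nu z (x - y) = nu z x - nu z y.
Proof. by rewrite brsk brBl opprB !(brsk _ z) opprK addrC. Qed.

Lemma brsumZl (c : 'I_m -> R) (F : 'I_m -> vec) z :
  nu (\sum_k c k *: F k) z = \sum_k c k *: nu (F k) z.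
Proof.
apply: (big_rec2 (fun a b => nu a z = b)); first exact: br0l.
by move=> i y1 y2 _ <-; rewrite brDl brZl.
Qed.

Lemma brsumZr (c : 'I_m -> R) (F : 'I_m -> vec) z :
  nu z (\sum_k c k *: F k) = \sum_k c k *: nu z (F k).
Proof.
rewrite brsk brsumZl -sumrN; apply: eq_bigr => k _.
by rewrite brsk scalerN opprK.
Qed.

End Br.

Lemma lin_sub (a : R) (p q r s : vec) :
  (a *: p + q) - (a *: r + s) = a *: (p - r) + (q - s).
Proof. by rewrite scalerBr opprD addrACA. Qed.

Lemma piA_br A nu : is_bracket nu -> is_bracket (piA A nu).
Proof.
move=> hb; have [h1 h2 h3] := hb.
have l1 : forall (a : R) x y z,
    piA A nu (a *: x + y) z = a *: piA A nu x z + piA A nu y z.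
  move=> a x y z; rewrite /piA !h1 mulmxDr -scalemxAr mulmxDr -scalemxAr h1.
  by rewrite lin_sub lin_sub.
have sk : forall x y, piA A nu x y = - piA A nu y x.
  move=> x y; rewrite /piA (h3 x y) (h3 (A *m x)) (h3 x (A *m y)) mulmxN.
  by rewrite !opprD !opprK addrAC.
split => //.
move=> a x y z; rewrite sk l1 (sk y) (sk z) scalerN opprD opprK.
by rewrite opprK.
Qed.


Definition Ssum (nu nu' : bracket R m) : R :=
  \sum_i \sum_j dotv (nu (e i) (e j)) (nu' (e i) (e j)).

Lemma half (f : 'I_m -> 'I_m -> R) :
  (forall i j, f i j = f j i) -> (forall i, f i i = 0) ->
  \sum_i \sum_j f i j =
  \sum_(i : 'I_m) \sum_(j : 'I_m | (i < j)%N) f i j + \sum_(i : 'I_m) \sum_(j : 'I_m | (i < j)%N) f i j.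
Proof.
move=> hs h0.
have e1 : forall i : 'I_m, \sum_j f i j =
   \sum_(j : 'I_m | (i < j)%N) f i j + \sum_(j : 'I_m | (j < i)%N) f i j.
  move=> i; rewrite (bigID (fun j : 'I_m => (i < j)%N)) /=; congr (_ + _).
  rewrite (bigID (fun j : 'I_m => (j < i)%N)) /= [X in _ + X]big1 ?addr0.
    by apply: eq_bigl => j; case: (ltngtP i j).
  move=> j /andP [h1 h2]; have -> : j = i.
    by apply: val_inj => /=; move: h1 h2; case: (ltngtP i j).
  exact: h0.
under eq_bigr => i _ do rewrite e1.
rewrite big_split /=; congr (_ + _).
under eq_bigr => i _ do rewrite big_mkcond.
rewrite exchange_big /=; apply: eq_bigr => i _; rewrite big_mkcond /=.
rewrite [RHS]big_mkcond; apply: eq_bigr => j _; by rewrite hs.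
Qed.

Lemma Ssum_half nu : is_bracket nu -> Ssum nu nu = bnorm2 nu + bnorm2 nu.
Proof.
move=> hb; rewrite /Ssum /bnorm2; apply: half.
  by move=> i j; rewrite (@brsk _ hb (e i) (e j)) dotvNl dotvNr opprK.
by move=> i; apply: dotv_anti; rewrite -(@brsk _ hb).
Qed.


Lemma dotvZl a u v : dotv (a *: u) v = a * dotv u v.
Proof. by rewrite dotvC dotvZr dotvC. Qed.

Lemma adj A nu nu' : is_bracket nu -> is_bracket nu' ->
  Ssum (piA A nu) nu' = Ssum nu (piA A^T nu').
Proof.
move=> hb hb'; rewrite /Ssum /piA.
under eq_bigr => i _ do under eq_bigr => j _ do rewrite !dotvBl.
under [RHS]eq_bigr => i _ do under eq_bigr => j _ do rewrite !dotvBr.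
under eq_bigr => i _ do rewrite !sumrB.
under [RHS]eq_bigr => i _ do rewrite !sumrB.
rewrite !sumrB; congr (_ - _ - _).
- by apply: eq_bigr => i _; apply: eq_bigr => j _; exact: dotvMl.
- under eq_bigr => i _ do under eq_bigr => j _ do
    rewrite mulmx_e (brsumZl _ hb) dotv_suml.
  under [RHS]eq_bigr => i _ do under eq_bigr => j _ do
    rewrite mulmx_e (brsumZl _ hb') dotv_sumr.
  under eq_bigr => i _ do rewrite exchange_big.
  rewrite exchange_big.
  under [RHS]eq_bigr => i _ do rewrite exchange_big.
  apply: eq_bigr => k _; apply: eq_bigr => i _; apply: eq_bigr => j _.
  by rewrite dotvZl dotvZr mxE.
- under eq_bigr => i _ do under eq_bigr => j _ do
    rewrite mulmx_e (brsumZr _ hb) dotv_suml.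
  under [RHS]eq_bigr => i _ do under eq_bigr => j _ do
    rewrite mulmx_e (brsumZr _ hb') dotv_sumr.
  apply: eq_bigr => i _; rewrite exchange_big.
  apply: eq_bigr => k _; apply: eq_bigr => j _.
  by rewrite dotvZl dotvZr mxE.
Qed.


Lemma commpi D mu x y : is_bracket mu -> (forall x y, piA D mu x y = 0) ->
  piA D (piA D^T mu) x y = piA (D *m D^T - D^T *m D) mu x y.
Proof.
move=> hb hD.
have hD' : forall u v, D *m mu u v = mu (D *m u) v + mu u (D *m v).
  move=> u v; apply/eqP; rewrite -subr_eq0 opprD addrA; apply/eqP; exact: hD.
rewrite /piA !mulmxBr !mulmxBl !(brBl _ hb) !(brBr _ hb) -!mulmxA !hD' !mulmxDr.
move: (D *m (D^T *m mu x y)) (mu (D *m (D^T *m x)) y) (mu (D^T *m x) (D *m y))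
  (mu (D *m x) (D^T *m y)) (mu x (D *m (D^T *m y))) (D^T *m mu (D *m x) y)
  (mu (D^T *m (D *m x)) y) (D^T *m mu x (D *m y)) (mu x (D^T *m (D *m y))).
move=> a1 a2 a3 a4 a5 a6 a7 a8 a9; apply/matrixP => i j; rewrite !mxE; ring.
Qed.


Lemma trS C mu Q : is_bracket mu ->
  (forall v w : 'cV[R]_m,
      dotv (Q *m v) w = \sum_i dotv (mu v (ebasis i)) (mu w (ebasis i))) ->
  Ssum (piA C mu) mu =
  (\tr (C *m Pmat mu) + \tr (C *m Pmat mu)) - (\tr (Q *m C) + \tr (Q *m C)).
Proof.
move=> hb hQ; rewrite /Ssum /piA.
under eq_bigr => i _ do under eq_bigr => j _ do rewrite !dotvBl.
under eq_bigr => i _ do rewrite !sumrB.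
rewrite !sumrB opprD addrA.
have T2 : \sum_i \sum_j dotv (mu (C *m e i) (e j)) (mu (e i) (e j)) = \tr (Q *m C).
  rewrite /mxtrace; apply: eq_bigr => i _.
  by rewrite -hQ dotv_e mulmxA /ebasis -colE mxE.
congr (_ - _ - _); last first.
- rewrite -T2 exchange_big; apply: eq_bigr => i _; apply: eq_bigr => j _.
  by rewrite (brsk _ hb (e j)) (brsk _ hb (e j) (e i)) dotvNl dotvNr opprK.
- exact: T2.
rewrite (half (fun i j => dotv (C *m mu (e i) (e j)) (mu (e i) (e j)))); last 2 first.
- by move=> i j; rewrite (brsk _ hb (e i)) mulmxN dotvNl dotvNr opprK.
- by move=> i; apply: dotv_anti; rewrite -(brsk _ hb).
have -> : \tr (C *m Pmat mu) =
   \sum_(i : 'I_m) \sum_(j : 'I_m | (i < j)%N) dotv (C *m mu (e i) (e j)) (mu (e i) (e j)).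
  rewrite /Pmat mulmx_sumr raddf_sum; apply: eq_bigr => i _.
  rewrite mulmx_sumr raddf_sum; apply: eq_bigr => j _.
  by rewrite mulmxA /= mxtrace_mulC trace_mx11 dotvC.
by [].
Qed.

End Aux.

Theorem lemma3p1 (R : realFieldType) (n : nat) (J : 'M[R]_(n.*2))
  (mu : bracket R n.*2) (lambda : R) (D : 'M[R]_(n.*2)) (Q : 'M[R]_(n.*2)) :
  orth_cplx_str J ->
  in_C J mu ->
  nilpotent_br mu ->
  is_der J mu D ->
  Pmat mu = lambda%:M + 2^-1 *: (D + D^T) ->
  (forall v w : 'cV[R]_(n.*2),
      dotv (Q *m v) w = \sum_(i < n.*2) dotv (mu v (ebasis i)) (mu w (ebasis i))) ->
  0 = bnorm2 (piA D^T mu) + \tr (Q *m (D *m D^T - D^T *m D)).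
Proof.
move=> _ [hb _ _] _ [_ hD] hP hQ.
have hnu := @piA_br _ _ D^T _ hb.
have e1 := @Ssum_half _ _ _ hnu.
have e2 := @adj _ _ D _ _ hnu hb.
have e3 : Ssum _ _ (piA D (piA D^T mu)) mu = Ssum _ _ (piA (D *m D^T - D^T *m D) mu) mu.
  by rewrite /Ssum; apply: eq_bigr => i _; apply: eq_bigr => j _; rewrite (@commpi _ _ D mu _ _ hb hD).
have e4 := @trS _ _ (D *m D^T - D^T *m D) _ _ hb hQ.
have e5 : \tr ((D *m D^T - D^T *m D) *m Pmat mu) = 0.
  have t0 : \tr (D *m D^T - D^T *m D) = 0.
    by rewrite raddfB /= mxtrace_mulC subrr.
  have t1 : \tr ((D *m D^T - D^T *m D) *m D) = 0.
    rewrite mulmxBl raddfB /=; apply/eqP; rewrite subr_eq0; apply/eqP.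
    by rewrite (mxtrace_mulC (D^T *m D) D) mulmxA.
  have t2 : \tr ((D *m D^T - D^T *m D) *m D^T) = 0.
    rewrite mulmxBl raddfB /=; apply/eqP; rewrite subr_eq0; apply/eqP.
    by rewrite (mxtrace_mulC (D *m D^T) D^T) mulmxA.
  rewrite hP mulmxDr mul_mx_scalar -scalemxAr mulmxDr mxtraceD !mxtraceZ.
  by rewrite t0 mxtraceD t1 t2 addr0 !mulr0 addr0.
rewrite -e2 e3 e4 e5 in e1.
lra.
Qed.
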